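(* Let $A$ be a commutative Noetherian ring of Krull dimension $d\geq 1$ and let $s$ be a non-zero-divisor of $A$. Then the generalized dimension of the localization $A_{1+sA}$ is $\leq d-1$.
   Context: Let $B$ be a commutative ring. For a function $\delta:\mathrm{Spec}(B)\to\mathbb{N}\cup\{0\}$, define a partial order on $\mathrm{Spec}(B)$ by $\mathfrak p\ll\mathfrak q$ if $\mathfrak p\subset\mathfrak q$ and $\delta(\mathfrak p)>\delta(\mathfrak q)$. Such a $\delta$ is a generalized dimension function if for every ideal $J$ of $B$, the set $V(J)$ has only finitely many minimal elements with respect to $\ll$. The generalized dimension of $B$ is the minimum, over all generalized dimension functions $\delta$ on $\mathrm{Spec}(B)$, of $\max_{\mathfrak p\in\mathrm{Spec}(B)}\delta(\mathfrak p)$. Here $A_{1+sA}$ denotes the localization of $A$ at the multiplicative set $1+sA$. *)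

(* Defs.v *)
From mathcomp Require Import all_boot all_algebra.
Set Implicit Arguments. Unset Strict Implicit. Unset Printing Implicit Defensive.
Import GRing.Theory.
Local Open Scope ring_scope.

Definition is_ideal (R : comNzRingType) (I : R -> Prop) : Prop :=
  [/\ I 0,
      (forall x y, I x -> I y -> I (x + y)) &
      (forall r x, I x -> I (r * x))].

Definition is_prime_ideal (R : comNzRingType) (P : R -> Prop) : Prop :=
  [/\ is_ideal P, ~ P 1 & (forall a b, P (a * b) -> P a \/ P b)].

Definition spec (R : comNzRingType) := {P : R -> Prop | is_prime_ideal P}.

Definition sub_ideal (R : comNzRingType) (I J : R -> Prop) : Prop :=
  forall x, I x -> J x.

Definition in_V (R : comNzRingType) (J : R -> Prop) (p : spec R) : Prop :=
  sub_ideal J (sval p).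

Definition gd_lt (R : comNzRingType) (delta : spec R -> nat) (p q : spec R) : Prop :=
  sub_ideal (sval p) (sval q) /\ (delta q < delta p)%N.

Definition gd_minimal (R : comNzRingType) (delta : spec R -> nat)
    (J : R -> Prop) (p : spec R) : Prop :=
  in_V J p /\ ~ (exists q, in_V J q /\ gd_lt delta q p).

Definition is_gen_dim_fun (R : comNzRingType) (delta : spec R -> nat) : Prop :=
  forall J : R -> Prop, is_ideal J ->
    exists (n : nat) (f : 'I_n -> spec R),
      forall p, gd_minimal delta J p -> exists i, p = f i.

(* "generalized dimension of R is <= n": the minimum over generalized dimension
   functions of max delta is <= n, i.e. some generalized dimension function
   delta satisfies delta p <= n for all p. *)
Definition gen_dim_le (R : comNzRingType) (n : nat) : Prop :=
  exists delta : spec R -> nat,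
    is_gen_dim_fun delta /\ forall p, (delta p <= n)%N.

Definition noetherian (R : comNzRingType) : Prop :=
  forall I : nat -> R -> Prop,
    (forall n, is_ideal (I n)) ->
    (forall n, sub_ideal (I n) (I n.+1)) ->
    exists N, forall n, (N <= n)%N -> sub_ideal (I n) (I N).

Definition prime_chain (R : comNzRingType) (n : nat) (c : nat -> R -> Prop) : Prop :=
  (forall i, (i <= n)%N -> is_prime_ideal (c i)) /\
  (forall i, (i < n)%N ->
     sub_ideal (c i) (c i.+1) /\ exists x, c i.+1 x /\ ~ c i x).

Definition krull_dim_eq (R : comNzRingType) (d : nat) : Prop :=
  (exists c : nat -> R -> Prop, prime_chain d c) /\ (forall n (c : nat -> R -> Prop), prime_chain n c -> (n <= d)%N).

Definition non_zero_divisor (R : comNzRingType) (s : R) : Prop :=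
  forall a : R, s * a = 0 -> a = 0.

Definition in_one_plus (R : comNzRingType) (s u : R) : Prop :=
  exists a, u = 1 + s * a.

(* f : A -> B is a localization of A at the multiplicative set 1 + sA
   (standard characterization up to unique isomorphism). *)
Definition is_localization_1sA (A B : comNzRingType) (s : A)
    (f : {rmorphism A -> B}) : Prop :=
  [/\ (forall u, in_one_plus s u -> exists v : B, f u * v = 1),
      (forall b : B, exists a u, in_one_plus s u /\ b * f u = f a) &
      (forall a, f a = 0 -> exists u, in_one_plus s u /\ u * a = 0)].

(* Main.v *)
Require Import Defs.
From mathcomp Require Import all_boot all_algebra.
From mathcomp Require Import ring zify.
From Stdlib Require Import Classical ClassicalEpsilon FunctionalExtensionality PropExtensionality ProofIrrelevance.
Set Implicit Arguments. Unset Strict Implicit. Unset Printing Implicit Defensive.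
Import GRing.Theory.
Local Open Scope ring_scope.

Lemma acc_max (R : comNzRingType) (P : (R -> Prop) -> Prop) (I0 : R -> Prop) :
  noetherian R -> is_ideal I0 -> P I0 ->
  exists M, [/\ is_ideal M, P M &
     forall J, is_ideal J -> P J -> sub_ideal M J -> sub_ideal J M].
Proof.
move=> HN HI0 HP0.
apply: NNPP => Hno.
have step : forall M : {M : R -> Prop | is_ideal M /\ P M},
   {J : {M : R -> Prop | is_ideal M /\ P M} |
     sub_ideal (sval M) (sval J) /\ ~ sub_ideal (sval J) (sval M)}.
  move=> [M [HM PM]]. apply: constructive_indefinite_description.
  apply: NNPP => H2; apply: Hno; exists M; split => // J HJ PJ HMJ.
  apply: NNPP => HJM; apply: H2. by exists (exist _ J (conj HJ PJ)).
pose I n := sval (iter n (fun M => sval (step M)) (exist _ I0 (conj HI0 HP0))).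
have [] := HN I.
- move=> n; rewrite /I; set z := iter _ _ _; exact: (proj1 (svalP z)).
- move=> n; rewrite /I /= ; exact: (proj1 (svalP (step _))).
move=> N HN'.
have := HN' N.+1 (leqnSn N).
rewrite /I /=. exact: (proj2 (svalP (step _))).
Qed.

Definition ideal_add (R : comNzRingType) (M : R -> Prop) (a : R) : R -> Prop :=
  fun x => exists m r, M m /\ x = m + r * a.

Lemma ideal_add_ideal (R : comNzRingType) (M : R -> Prop) a :
  is_ideal M -> is_ideal (ideal_add M a).
Proof.
case=> M0 MD MM; split.
- exists 0, 0; split => //; by rewrite mul0r addr0.
- move=> x y [m [r [Hm ->]]] [m' [r' [Hm' ->]]]. exists (m + m'), (r + r'); split; first exact: MD.
  by rewrite mulrDl addrACA.
- move=> r0 x [m [r [Hm ->]]]. exists (r0 * m), (r0 * r); split; first exact: MM.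
  by rewrite mulrDr mulrA.
Qed.

Lemma ideal_add_sub (R : comNzRingType) (M : R -> Prop) a :
  is_ideal M -> sub_ideal M (ideal_add M a).
Proof. case=> M0 _ _ x Hx. exists x, 0. by rewrite mul0r addr0. Qed.

Lemma ideal_add_a (R : comNzRingType) (M : R -> Prop) a :
  is_ideal M -> ideal_add M a a.
Proof. case=> M0 _ _. exists 0, 1. by rewrite mul1r add0r. Qed.

Lemma ideal_add_prime (R : comNzRingType) (M p : R -> Prop) a :
  sub_ideal M p -> is_ideal p -> p a -> sub_ideal (ideal_add M a) p.
Proof. move=> HMp [_ pD pM] pa x [m [r [Hm ->]]]. apply: pD; [exact: HMp | exact: pM]. Qed.

Lemma max_avoid_prime (R : comNzRingType) (S : R -> Prop) (Q : R -> Prop) :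
  S 1 -> (forall x y, S x -> S y -> S (x * y)) ->
  is_ideal Q -> (forall x, Q x -> ~ S x) ->
  (forall J, is_ideal J -> (forall x, J x -> ~ S x) -> sub_ideal Q J -> sub_ideal J Q) ->
  is_prime_ideal Q.
Proof.
move=> S1 SM HQ QS Hmax. split => //.
- move=> Q1. exact: QS Q1 S1.
- move=> a b Hab. apply: NNPP => /not_or_and [Ha Hb].
  have Ea : exists x, ideal_add Q a x /\ S x.
    apply: NNPP => H. apply: Ha. apply: (Hmax _ (ideal_add_ideal a HQ)).
    - move=> x Hx Sx. apply: H. by exists x.
    - exact: ideal_add_sub.
    - exact: ideal_add_a.
  have Eb : exists x, ideal_add Q b x /\ S x.
    apply: NNPP => H. apply: Hb. apply: (Hmax _ (ideal_add_ideal b HQ)).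
    - move=> x Hx Sx. apply: H. by exists x.
    - exact: ideal_add_sub.
    - exact: ideal_add_a.
  case: Ea => x [[m [r [Hm ->]]] Sx]. case: Eb => y [[m' [r' [Hm' ->]]] Sy].
  apply: (QS _ _ (SM _ _ Sx Sy)).
  case: HQ => Q0 QD QM.
  have -> : (m + r * a) * (m' + r' * b)
     = (m + r * a) * m' + (r' * b) * m + (r * r') * (a * b) by ring.
  apply: (QD); first apply: (QD).
  + exact: (QM).
  + exact: (QM).
  + exact: (QM).
Qed.

Lemma fam_cat T n1 n2 (g1 : 'I_n1 -> T) (g2 : 'I_n2 -> T) :
  exists g : 'I_(n1 + n2) -> T,
   [/\ forall i, (exists j, g i = g1 j) \/ (exists j, g i = g2 j),
       forall j, exists i, g i = g1 j & forall j, exists i, g i = g2 j].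
Proof.
exists (fun i => match split i with inl j => g1 j | inr k => g2 k end); split.
- move=> i; case: (split i) => j; [left|right]; by exists j.
- move=> j; exists (unsplit (inl j)); by rewrite unsplitK.
- move=> j; exists (unsplit (inr j)); by rewrite unsplitK.
Qed.

Lemma fam0 T : exists g : 'I_0 -> T, True.
Proof. by exists (fun i : 'I_0 => False_rect T (ltac:(by case: i))). Qed.

Definition good (R : comNzRingType) (J : R -> Prop) : Prop :=
  exists n (g : 'I_n -> spec R), (forall i, in_V J (g i)) /\
    forall p, in_V J p -> exists i, sub_ideal (sval (g i)) (sval p).

Lemma noeth_good (R : comNzRingType) (J : R -> Prop) :
  noetherian R -> is_ideal J -> good J.
Proof.
move=> HN HJ. apply: NNPP => HnJ.
have [M [HM PM Hmax]] := acc_max (P := fun I => ~ good I) HN HJ HnJ.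
apply: PM.
case: (classic (M 1)) => M1.
  have [g0 _] := fam0 (spec R).
  exists 0%N, g0; split; first by case.
  move=> p Hp; exfalso; case: (svalP p) => _ H1 _; exact: H1 (Hp _ M1).
case: (classic (forall a b, M (a * b) -> M a \/ M b)) => Hpr.
  have pM : is_prime_ideal M by split.
  exists 1%N, (fun _ => exist _ M pM); split; first by move=> i x.
  move=> p Hp; exists ord0; exact: Hp.
have [a [b [Mab [Ma Mb]]]] : exists a b, M (a * b) /\ ~ M a /\ ~ M b.
  apply: NNPP => H; apply: Hpr => a b Hab; apply: NNPP => /not_or_and [Ha Hb].
  apply: H; by exists a, b.
have goodA : good (ideal_add M a).
  apply: NNPP => H; apply: Ma.
  apply: (Hmax _ (ideal_add_ideal a HM) H (ideal_add_sub a HM)); exact: ideal_add_a.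
have goodB : good (ideal_add M b).
  apply: NNPP => H; apply: Mb.
  apply: (Hmax _ (ideal_add_ideal b HM) H (ideal_add_sub b HM)); exact: ideal_add_a.
case: goodA => n1 [g1 [V1 C1]]; case: goodB => n2 [g2 [V2 C2]].
have [g [Hg1 Hg2 Hg3]] := fam_cat g1 g2.
exists (n1 + n2)%N, g; split.
- move=> i; case: (Hg1 i) => [[j ->]|[j ->]] x Mx.
  + apply: V1; exact: ideal_add_sub.
  + apply: V2; exact: ideal_add_sub.
- move=> p Hp; have [pI _ pP] := svalP p.
  case: (pP a b (Hp _ Mab)) => Hpa.
  + have [j Hj] := C1 p (ideal_add_prime Hp pI Hpa).
    have [i Hi] := Hg2 j; exists i; by rewrite Hi.
  + have [j Hj] := C2 p (ideal_add_prime Hp pI Hpa).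
    have [i Hi] := Hg3 j; exists i; by rewrite Hi.
Qed.

Lemma loc_noeth (A B : comNzRingType) (s : A) (f : {rmorphism A -> B}) :
  is_localization_1sA s f -> noetherian A -> noetherian B.
Proof.
case=> Hu Hs Hk HN I HI Hinc.
case: (HN (fun n a => I n (f a))).
- move=> n. case: (HI n) => I0 ID IM; split.
  + by rewrite rmorph0.
  + move=> x y ? ?; rewrite rmorphD; exact: ID.
  + move=> r x ?; rewrite rmorphM; exact: IM.
- move=> n x; exact: Hinc.
move=> N HNN.
exists N => n Hn b Hb.
have [a [u [Hu' Hba]]] := Hs b.
have [v Hv] := Hu u Hu'.
have HIa : I N (f a).
  apply: (HNN n Hn). rewrite -Hba. case: (HI n) => _ _ IM; rewrite mulrC; exact: IM.
have -> : b = f a * v by rewrite -Hba -mulrA Hv mulr1.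
rewrite mulrC; case: (HI N) => _ _ IM; exact: IM.
Qed.

Lemma contract_prime (A B : comNzRingType) (f : {rmorphism A -> B}) (P : B -> Prop) :
  is_prime_ideal P -> is_prime_ideal (fun a => P (f a)).
Proof.
case=> [[P0 PD PM] P1 PP]; split; [split | |].
- by rewrite rmorph0.
- move=> x y Hx Hy; rewrite rmorphD; exact: PD.
- move=> r x Hx; rewrite rmorphM; exact: PM.
- by rewrite rmorph1.
- move=> a b; rewrite rmorphM; exact: PP.
Qed.

Lemma contract_strict (A B : comNzRingType) (s : A) (f : {rmorphism A -> B}) (P Q : B -> Prop) :
  is_localization_1sA s f -> is_ideal P -> is_ideal Q ->
  (exists x, P x /\ ~ Q x) -> exists a, P (f a) /\ ~ Q (f a).
Proof.
case=> Hu Hs _ [_ _ PM] [_ _ QM] [x [Px Qx]].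
have [a [u [Hu' Hxa]]] := Hs x. have [v Hv] := Hu u Hu'.
exists a; split.
- rewrite -Hxa mulrC; exact: PM.
- move=> Qa; apply: Qx.
  have -> : x = f a * v by rewrite -Hxa -mulrA Hv mulr1.
  rewrite mulrC; exact: QM.
Qed.

Lemma chain_contract (A B : comNzRingType) (s : A) (f : {rmorphism A -> B}) n
   (c : nat -> B -> Prop) : is_localization_1sA s f -> prime_chain n c ->
  prime_chain n (fun i a => c i (f a)).
Proof.
move=> Hl [Hp Hs]; split.
- move=> i Hi; exact: contract_prime (Hp i Hi).
- move=> i Hi; have [Hsub Hx] := Hs i Hi; split.
  + move=> a; exact: Hsub.
  + have [I1 _ _] := Hp i.+1 Hi.
    have [I2 _ _] := Hp i (ltnW Hi).
    have [a Ha] := contract_strict Hl I1 I2 Hx; by exists a.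
Qed.

Definition chain_from (R : comNzRingType) (p : spec R) (n : nat) : Prop :=
  exists c : nat -> R -> Prop, prime_chain n c /\ c 0%N = sval p.

Lemma chain_from0 (R : comNzRingType) (p : spec R) : chain_from p 0.
Proof.
exists (fun _ => sval p); split => //; split => [i _| i]; [exact: svalP | by rewrite ltn0].
Qed.

Lemma chain_prepend (R : comNzRingType) (p q : spec R) n :
  sub_ideal (sval q) (sval p) -> (exists x, sval p x /\ ~ sval q x) ->
  chain_from p n -> chain_from q n.+1.
Proof.
move=> Hsub Hx [c [[Hp Hs] Hc0]].
exists (fun i => if i is j.+1 then c j else sval q); split => //; split.
- case=> [|i] Hi /=; [exact: svalP | exact: Hp].
- case=> [|i] Hi /=; first by rewrite Hc0; split.
  exact: Hs.
Qed.

Lemma nat_max (P : nat -> Prop) b : P 0%N -> (forall n, P n -> (n <= b)%N) ->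
  exists m, P m /\ forall n, P n -> (n <= m)%N.
Proof.
move=> P0; elim: b => [|b IH] Hb.
- exists 0%N; split => // n /Hb; by rewrite leqn0 => /eqP ->.
- case: (classic (P b.+1)) => Hb1; first by exists b.+1.
  apply: IH => n Pn. have := Hb n Pn. rewrite leq_eqVlt => /orP [/eqP Hn|//].
  by exfalso; apply: Hb1; rewrite -Hn.
Qed.

Lemma spec_eq (R : comNzRingType) (p q : spec R) :
  (forall x, sval p x <-> sval q x) -> p = q.
Proof.
case: p => P HP; case: q => Q HQ /= H.
have E : P = Q.
  apply: functional_extensionality => x; apply: propositional_extensionality; exact: H.
subst Q; f_equal; apply: proof_irrelevance.
Qed.

Theorem lemma3p2 (A B : comNzRingType) (d : nat) (s : A)
    (f : {rmorphism A -> B}) :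
  noetherian A -> krull_dim_eq A d -> (1 <= d)%N ->
  non_zero_divisor s -> is_localization_1sA s f ->
  gen_dim_le B d.-1.
Proof.
move=> HN [_ Hkd] Hd1 Hnzd Hl.
have HNB := loc_noeth Hl HN.
have Hbound : forall (p : spec B) n, chain_from p n -> (n <= d)%N.
  move=> p n [c [Hc _]]. exact: Hkd _ _ (chain_contract Hl Hc).
have [D [HD1 HD2]] : exists D : spec B -> nat, (forall p, chain_from p (D p)) /\
    forall p n, chain_from p n -> (n <= D p)%N.
  have HD : forall p : spec B, exists m, chain_from p m /\ forall n, chain_from p n -> (n <= m)%N.
    move=> p; apply: (nat_max (b := d)); [exact: chain_from0 | exact: Hbound p].
  exists (fun p => proj1_sig (constructive_indefinite_description _ (HD p))); split.
  + move=> p; exact: (proj1 (proj2_sig (constructive_indefinite_description _ (HD p)))).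
  + move=> p; exact: (proj2 (proj2_sig (constructive_indefinite_description _ (HD p)))).
have Dlt : forall p q : spec B, sub_ideal (sval q) (sval p) ->
    (exists x, sval p x /\ ~ sval q x) -> (D p < D q)%N.
  move=> p q Hs Hx. exact: HD2 (chain_prepend Hs Hx (HD1 p)).
have Hl' := Hl; case: Hl' => Hu Hs Hk.
have F1 : forall b, f s * b = 0 -> b = 0.
  move=> b Hb. have [a [u [Hu' Hba]]] := Hs b. have [v Hv] := Hu u Hu'.
  have : f (s * a) = 0 by rewrite rmorphM -Hba mulrA Hb mul0r.
  move/Hk => [u2 [Hu2 H2]].
  have H3 : s * (u2 * a) = 0 by rewrite mulrCA H2.
  have H4 := Hnzd _ H3. have [v2 Hv2] := Hu u2 Hu2.
  have H5 : f u2 * f a = 0 by rewrite -rmorphM H4 rmorph0.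
  have Hfa : f a = 0 by rewrite -[f a]mul1r -Hv2 mulrAC H5 mul0r.
  by rewrite -[b]mulr1 -Hv mulrA Hba Hfa mul0r.
have F1k : forall k t, f s ^+ k * t = 0 -> t = 0.
  elim=> [|k IH] t; first by rewrite expr0 mul1r.
  rewrite exprS -mulrA => /F1; exact: IH.
have F2 : forall p : spec B, ~ sval p (f s) ->
    exists q : spec B, sub_ideal (sval p) (sval q) /\ sval q (f s).
  move=> p Hps.
  have [pI p1 _] := svalP p.
  have HI0 := ideal_add_ideal (f s) pI.
  have N1 : ~ ideal_add (sval p) (f s) 1.
    move=> [m [r [Hm H1]]].
    have [a [u [[c Huc] Hra]]] := Hs r.
    have [w Hw] := Hu (1 + s * (c - a)) (ex_intro _ (c - a) erefl).
    have E : m * f u = f (1 + s * (c - a)).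
      have Em : m = 1 - r * f s by rewrite H1 addrK.
      rewrite Em rmorphD rmorph1 rmorphM rmorphB -Hra Huc rmorphD rmorph1 rmorphM; ring.
    apply: p1. have -> : (1 : B) = (f u * w) * m by rewrite mulrC mulrA E Hw.
    case: pI => _ _ pM; exact: pM.
  have [M [HM [PM1 PM2] Hmax]] := acc_max (P := fun I => sub_ideal (ideal_add (sval p) (f s)) I /\ ~ I 1)
     HNB HI0 (conj (fun x h => h) N1).
  have pM : is_prime_ideal M.
    apply: (max_avoid_prime (S := fun x => x = 1)) => //.
    - by move=> x y -> ->; rewrite mulr1.
    - by move=> x Mx Ex; apply: PM2; rewrite -Ex.
    - move=> J HJ HJS HMJ. apply: Hmax => //; split.
      + move=> x Hx; apply: HMJ; exact: PM1.
      + move=> J1; exact: HJS J1 erefl.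
  exists (exist _ M pM); split => /=.
  - move=> x Hx; apply: PM1; exact: ideal_add_sub.
  - apply: PM1; exact: ideal_add_a.
have F3 : forall p : spec B, sval p (f s) -> (D p < d)%N.
  move=> p Hps.
  have [pI p1 pP] := svalP p.
  pose S := fun x => exists k t, ~ sval p t /\ x = f s ^+ k * t.
  have Z : is_ideal (fun x : B => x = 0).
    split => //; [by move=> x y -> ->; rewrite addr0 | by move=> r x ->; rewrite mulr0].
  have PZ : forall x, (fun x : B => x = 0) x -> ~ S x.
    move=> x -> [k [t [Ht E]]]. apply: Ht. rewrite (F1k k t (esym E)).
    by case: pI.
  have [Q [HQ QS Hmax]] := acc_max (P := fun I => forall x, I x -> ~ S x) HNB Z PZ.
  have pQ : is_prime_ideal Q.
    apply: (max_avoid_prime (S := S)) => //.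
    - exists 0%N, 1; split => //; by rewrite expr0 mulr1.
    - move=> x y [k [t [Ht ->]]] [l [t' [Ht' ->]]].
      exists (k + l)%N, (t * t'); split; last by rewrite exprD mulrACA.
      by case/pP.
  have Hsub : sub_ideal Q (sval p).
    move=> x Qx; apply: NNPP => Hx; apply: (QS x Qx); exists 0%N, x; split => //.
    by rewrite expr0 mul1r.
  have Hstr : exists x, sval p x /\ ~ Q x.
    exists (f s); split => // Qs; apply: (QS _ Qs); exists 1%N, 1; split => //.
    by rewrite expr1 mulr1.
  exact: (Hbound _ _ (chain_prepend (q := exist _ Q pQ) Hsub Hstr (HD1 p))).
pose delta := fun p : spec B =>
  if excluded_middle_informative (sval p (f s)) then D p else (D p).-1.
have dIn : forall p, sval p (f s) -> delta p = D p.
  move=> p H; rewrite /delta; destruct (excluded_middle_informative _) as [|n]; [done | by case: n].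
have dOut : forall p, ~ sval p (f s) -> delta p = (D p).-1.
  move=> p H; rewrite /delta; destruct (excluded_middle_informative _) as [n|]; [by case: H | done].
exists delta; split; last first.
  move=> p; rewrite /delta; case: excluded_middle_informative => H.
  + have := F3 p H; rewrite /= -!subn1; lia.
  + have := Hbound p _ (HD1 p); rewrite /= -!subn1; lia.
move=> J HJ.
have [n1 [g1 [V1 C1]]] := noeth_good HNB HJ.
have [n2 [g2 [V2 C2]]] := noeth_good HNB (ideal_add_ideal (f s) HJ).
have [g [_ G1 G2]] := fam_cat g1 g2.
exists (n1 + n2)%N, g => p [HpJ Hmin].
have [pI _ _] := svalP p.
case: (excluded_middle_informative (sval p (f s))) => Hps.
- have [k Hsk] := C2 p (ideal_add_prime HpJ pI Hps).
  have Hsks : sval (g2 k) (f s) by apply: V2; exact: ideal_add_a.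
  case: (classic (exists x, sval p x /\ ~ sval (g2 k) x)) => Hx.
  + exfalso; apply: Hmin; exists (g2 k); split.
    * move=> x Jx; apply: V2; exact: ideal_add_sub.
    * split => //. have := Dlt _ _ Hsk Hx.
      by rewrite (dIn _ Hps) (dIn _ Hsks).
  + have E : p = g2 k.
      apply: spec_eq => x; split; last exact: Hsk.
      move=> px; apply: NNPP => nx; apply: Hx; by exists x.
    have [i Hi] := G2 k; exists i; by rewrite Hi.
- have [k Hsk] := C1 p HpJ.
  have Hsks : ~ sval (g1 k) (f s) by move/Hsk.
  have [q [Hpq Hqs]] := F2 p Hps.
  have Dp1 : (0 < D p)%N.
    have := Dlt q p Hpq (ex_intro _ (f s) (conj Hqs Hps)); lia.
  case: (classic (exists x, sval p x /\ ~ sval (g1 k) x)) => Hx.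
  + exfalso; apply: Hmin; exists (g1 k); split; first exact: V1.
    split => //. have := Dlt _ _ Hsk Hx.
    rewrite (dOut _ Hps) (dOut _ Hsks) -!subn1; lia.
  + have E : p = g1 k.
      apply: spec_eq => x; split; last exact: Hsk.
      move=> px; apply: NNPP => nx; apply: Hx; by exists x.
    have [i Hi] := G1 k; exists i; by rewrite Hi.
Qed.
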